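(* Let $L, S, M$ be positive integers and $n = 3L$. Let $\mathbf{D}\in\mathbb{R}^{n\times S}$ and $\mathbf{U}\in\mathbb{R}^{M\times S}$ be real matrices, and let $\mathbf{W}\in\mathbb{R}^{n\times n}$ be a diagonal matrix with nonnegative diagonal entries. Define $$\mathbf{A}=\frac{1}{S}\mathbf{D}\mathbf{D}^\mathsf{T},\qquad \mathbf{P}=\begin{bmatrix}\mathbf{D}\\ \mathbf{U}\end{bmatrix}\in\mathbb{R}^{(n+M)\times S},\qquad \widetilde{\mathbf{A}}=\frac{1}{S}\mathbf{P}\mathbf{P}^\mathsf{T},\qquad \widetilde{\mathbf{W}}=\begin{bmatrix}\mathbf{W}&\mathbf{0}\\ \mathbf{0}&\mathbf{0}_{M\times M}\end{bmatrix},\qquad \mathbf{C}=\frac{1}{S}\mathbf{U}\mathbf{D}^\mathsf{T}.$$ Then: (i) for every $\lambda$, $\det(\widetilde{\mathbf{A}}\widetilde{\mathbf{W}}-\lambda\mathbf{I}_{n+M})=(-\lambda)^M\det(\mathbf{A}\mathbf{W}-\lambda\mathbf{I}_n)$; hence the eigenvalues of $\widetilde{\mathbf{A}}\widetilde{\mathbf{W}}$ (with algebraic multiplicity) are exactly the eigenvalues of $\mathbf{A}\mathbf{W}$ together with $M$ additional zero eigenvalues; (ii) if $\mathbf{z}\neq\mathbf{0}$ satisfies $\mathbf{A}\mathbf{W}\mathbf{z}=\lambda\mathbf{z}$ with $\lambda\neq 0$, then the vector $\begin{bmatrix}\mathbf{z}\\ \mathbf{v}\end{bmatrix}$ with $\mathbf{v}=\lambda^{-1}\mathbf{C}\mathbf{W}\mathbf{z}$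 satisfies $\widetilde{\mathbf{A}}\widetilde{\mathbf{W}}\begin{bmatrix}\mathbf{z}\\ \mathbf{v}\end{bmatrix}=\lambda\begin{bmatrix}\mathbf{z}\\ \mathbf{v}\end{bmatrix}$; conversely, if $\begin{bmatrix}\mathbf{q}\\ \mathbf{v}\end{bmatrix}\neq\mathbf{0}$ (with $\mathbf{q}\in\mathbb{R}^n$, $\mathbf{v}\in\mathbb{R}^M$) is an eigenvector of $\widetilde{\mathbf{A}}\widetilde{\mathbf{W}}$ with eigenvalue $\lambda\neq0$, then $\mathbf{q}\neq\mathbf{0}$, $\mathbf{A}\mathbf{W}\mathbf{q}=\lambda\mathbf{q}$, and $\mathbf{v}=\lambda^{-1}\mathbf{C}\mathbf{W}\mathbf{q}$.
   Context: This compares the weighted principal component analysis of a data matrix $\mathbf{D}$ of (centered) discretized shape-modification vectors (eigenproblem of $\mathbf{A}\mathbf{W}$, ''KLE'') with that of the augmented matrix $\mathbf{P}$ obtained by appending the (centered) design-variable samples $\mathbf{U}$ with zero weight (eigenproblem of $\widetilde{\mathbf{A}}\widetilde{\mathbf{W}}$, ''parametric model embedding''). The element-measure matrix is taken to be the identity. *)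

(* Defs.v *)
From HB Require Import structures.
From mathcomp Require Import all_boot all_order all_algebra.
Set Implicit Arguments. Unset Strict Implicit. Unset Printing Implicit Defensive.
Import Order.TTheory GRing.Theory Num.Theory.
Local Open Scope ring_scope.

Section KLE.
Variables (R : realFieldType) (L S M : nat).
Local Notation n := (3 * L)%N.

Definition KLE_A (D : 'M[R]_(n, S)) : 'M[R]_n := (S%:R)^-1 *: (D *m D^T).
Definition PME_P (D : 'M[R]_(n, S)) (U : 'M[R]_(M, S)) : 'M[R]_(n + M, S) :=
  col_mx D U.
Definition PME_A (D : 'M[R]_(n, S)) (U : 'M[R]_(M, S)) : 'M[R]_(n + M) :=
  (S%:R)^-1 *: (PME_P D U *m (PME_P D U)^T).
Definition PME_W (W : 'M[R]_n) : 'M[R]_(n + M) := block_mx W 0 0 (0 : 'M[R]_M).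
Definition PME_C (D : 'M[R]_(n, S)) (U : 'M[R]_(M, S)) : 'M[R]_(M, n) :=
  (S%:R)^-1 *: (U *m D^T).
End KLE.

(* Main.v *)
Require Import Defs.
From HB Require Import structures.
From mathcomp Require Import all_boot all_order all_algebra.
Import Order.TTheory GRing.Theory Num.Theory.
Local Open Scope ring_scope.

Lemma AtWt_block (R : realFieldType) (L S M : nat)
  (D : 'M[R]_(3 * L, S)) (U : 'M[R]_(M, S)) (W : 'M[R]_(3 * L)) :
  PME_A D U *m PME_W M W = block_mx (KLE_A D *m W) 0 (PME_C D U *m W) 0.
Proof.
rewrite /PME_A /PME_W /PME_P /KLE_A /PME_C tr_col_mx mul_col_row scale_block_mx.
rewrite mulmx_block !mulmx0 !addr0 -!scalemxAl.
by congr block_mx; rewrite mul0mx addr0.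
Qed.

Theorem mainTheorem1 (R : realFieldType) (L S M : nat)
  (hL : (0 < L)%N) (hS : (0 < S)%N) (hM : (0 < M)%N)
  (D : 'M[R]_(3 * L, S)) (U : 'M[R]_(M, S)) (W : 'M[R]_(3 * L))
  (hWdiag : is_diag_mx W) (hWnonneg : forall i, 0 <= W i i) :
  let A := KLE_A D in
  let At := PME_A D U in
  let Wt := PME_W M W in
  let C := PME_C D U in
  (* (i) *)
  ((forall lambda : R,
      \det (At *m Wt - lambda%:M) = (- lambda) ^+ M * \det (A *m W - lambda%:M))
   /\ char_poly (At *m Wt) = 'X ^+ M * char_poly (A *m W))
  /\
  (* (ii) *)
  ((forall (z : 'cV[R]_(3 * L)) (lambda : R),
      z != 0 -> lambda != 0 -> A *m W *m z = lambda *: z ->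
      let v := lambda^-1 *: (C *m W *m z) in
      At *m Wt *m col_mx z v = lambda *: col_mx z v)
   /\
   (forall (q : 'cV[R]_(3 * L)) (v : 'cV[R]_M) (lambda : R),
      col_mx q v != 0 -> lambda != 0 ->
      At *m Wt *m col_mx q v = lambda *: col_mx q v ->
      [/\ q != 0, A *m W *m q = lambda *: q & v = lambda^-1 *: (C *m W *m q)])).
Proof.
move=> A At Wt C.
have E : At *m Wt = block_mx (A *m W) 0 (C *m W) 0 by exact: AtWt_block.
split; [split|split].
- move=> lam; rewrite E scalar_mx_block opp_block_mx add_block_mx !oppr0 !addr0 add0r.
  have h : (- lam%:M : 'M[R]_M) = (-lam)%:M.
    by apply/matrixP => i j; rewrite !mxE mulNrn.
  by rewrite det_lblock h det_scalar mulrC.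
- have -> : char_poly (At *m Wt) = char_poly (block_mx (A *m W) 0 (C *m W) (0 : 'M[R]_M)).
    by apply: f_equal; exact: E.
  rewrite /char_poly /char_poly_mx /char_poly_mx map_block_mx !map_mx0 scalar_mx_block.
  by rewrite opp_block_mx add_block_mx !oppr0 !addr0 det_lblock det_scalar mulrC.
- move=> z lam z0 l0 Hz v.
  rewrite E mul_block_col !mul0mx !addr0 scale_col_mx Hz /v scalerA mulfV // scale1r.
  by [].
- move=> q v lam nz l0.
  rewrite E mul_block_col !mul0mx !addr0 scale_col_mx => /eq_col_mx [H1 H2].
  have Hv : v = lam^-1 *: (C *m W *m q).
    by rewrite H2 scalerA mulVf // scale1r.
  split => //.
  apply/eqP => q0; move: nz; rewrite Hv q0 mulmx0 scaler0 col_mx0 eqxx //.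
Qed.
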